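(* For every integer $n\geq 2$, let $o_n=|\{i: K_i=1,\ 1\le i\le n\}|$ and $t_n=|\{i: K_i=2,\ 1\le i\le n\}|$. Then \[\frac14\le \frac{o_n}{t_n}\le 4 .\]
   Context: $K=(K_n)_{n\ge1}$ denotes the classical Kolakoski sequence: the unique infinite sequence over the alphabet $\{1,2\}$ with $K_1=1$ whose sequence of run lengths equals $K$ itself (a run is a maximal block of consecutive equal symbols). Its first terms are $1,2,2,1,1,2,1,2,2,1,2,2,1,1,\dots$ *)

(* Defs.v *)
From mathcomp Require Import all_boot all_order all_algebra.
Set Implicit Arguments. Unset Strict Implicit. Unset Printing Implicit Defensive.

(* Sequences are functions nat -> nat, indexed from 1 (index 0 is ignored). *)

Fixpoint run_start (L : nat -> nat) (j : nat) : nat :=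
  match j with
  | 0 => 1
  | 1 => 1
  | j'.+1 => run_start L j' + L j'
  end.

(* K has run-length sequence L: positions 1,2,... are partitioned into
   consecutive blocks of lengths L 1, L 2, ...; K is constant on each block
   and takes different values on consecutive blocks (so the blocks are
   exactly the maximal runs). *)
Definition has_run_lengths (K L : nat -> nat) : Prop :=
  (forall j, 0 < j -> 0 < L j) /\
  (forall j i, 0 < j -> run_start L j <= i < run_start L j.+1 ->
     K i = K (run_start L j)) /\
  (forall j, 0 < j -> K (run_start L j.+1) <> K (run_start L j)).

Definition is_kolakoski (K : nat -> nat) : Prop :=
  (forall i, 0 < i -> K i = 1 \/ K i = 2) /\
  K 1 = 1 /\
  has_run_lengths K K.

Definition count_val (K : nat -> nat) (v n : nat) : nat :=
  #|[set i : 'I_n.+1 | (0 < (i : nat)) && (K i == v)]|.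
Definition ones (K : nat -> nat) (n : nat) : nat := count_val K 1 n.
Definition twos (K : nat -> nat) (n : nat) : nat := count_val K 2 n.

(* Main.v *)
Require Import Defs.
From mathcomp Require Import all_boot all_order all_algebra zify lra.
Definition cnt (K : nat -> nat) v n := \sum_(i < n.+1) ((0 < i) && (K i == v) : nat).
Lemma cntE K v n : count_val K v n = cnt K v n.
Proof.
rewrite /count_val /cnt -sum1_card big_mkcond /=.
by apply: eq_bigr => i _; rewrite inE; case: (_ && _).
Qed.
Lemma cntS K v n : cnt K v n.+1 = cnt K v n + (K n.+1 == v).
Proof. by rewrite /cnt big_ord_recr /=. Qed.

Lemma rsS L j : 0 < j -> run_start L j.+1 = run_start L j + L j.
Proof. by case: j. Qed.

Lemma in_run L (HL : forall j, 0 < j -> 0 < L j) i : 0 < i ->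
  exists j, 0 < j /\ run_start L j <= i < run_start L j.+1.
Proof.
elim: i => [//|i IH] _.
case: i IH => [|i] IH.
  exists 1; split=> //=. have := HL 1 erefl; lia.
have [j [j0 /andP[h1 h2]]] := IH erefl.
case: (ltnP i.+2 (run_start L j.+1)) => h3.
  exists j; split=> //; lia.
exists j.+1; split=> //.
rewrite (@rsS L j.+1 (ltn0Sn j)). have := HL j.+1 erefl. lia.
Qed.

Lemma no_three K (HK : is_kolakoski K) i : 0 < i ->
  K i = K i.+1 -> K i.+1 = K i.+2 -> False.
Proof.
case: HK => [Hv [H1 [HL [Hc Hd]]]] i0 e1 e2.
have [j [j0 /andP[h1 h2]]] := in_run K HL i i0.
have hj := HL j j0. have hv := Hv j j0.
have hs := @rsS K j j0.
set m := run_start K j.+1 in h2 hs.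
have Kj : K j <= 2 by case: hv => ->.
have em1 : K m.-1 = K (run_start K j) by apply: Hc => //; lia.
have em := Hd j j0.
have : m = i.+1 \/ m = i.+2 by lia.
case=> E; rewrite E /= in em1; rewrite -/m E in em.
  by apply: em; rewrite -em1.
by apply: em; rewrite -em1.
Qed.

Lemma K2 K (HK : is_kolakoski K) : K 2 = 2.
Proof.
case: HK => [Hv [H1 [HL [Hc Hd]]]].
have := Hd 1 erefl. rewrite /= H1 /=.
by case: (Hv 2 erefl) => ->.
Qed.

Lemma inv K (HK : is_kolakoski K) v w : (v == 1) && (w == 2) || (v == 2) && (w == 1) ->
  forall n, 2 <= n ->
  cnt K v n <= 2 * cnt K w n + ((K n == v) + ((K n == v) && (K n.-1 == v))).
Proof.
move=> hvw n; elim: n => [//|n IH] hn.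
have K2' := K2 K HK.
have [Hv [H1 _]] := HK.
case: n IH hn => [//|[|n]] IH hn.
  rewrite /cnt !big_ord_recr big_ord0 /= H1 K2'.
  by case/orP: hvw => /andP[/eqP-> /eqP->] /=; lia.
rewrite (cntS K v n.+2) (cntS K w n.+2).
have := IH erefl.
have nt := @no_three K HK n.+1 erefl.
case: (Hv n.+1 erefl) nt => -> nt; case: (Hv n.+2 erefl) nt => -> nt;
case: (Hv n.+3 erefl) nt => -> nt /=;
  try (exfalso; by apply: nt);
  case/orP: hvw => /andP[/eqP-> /eqP->] /=; lia.
Qed.

Lemma cnt_mono K v m n : m <= n -> cnt K v m <= cnt K v n.
Proof.
move=> /subnK <-; elim: (n - m) => [//|k IH].
by rewrite addSn cntS; apply: leq_trans IH (leq_addr _ _).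
Qed.

Lemma bound K (HK : is_kolakoski K) v w : (v == 1) && (w == 2) || (v == 2) && (w == 1) ->
  forall n, 2 <= n -> cnt K v n <= 4 * cnt K w n.
Proof.
move=> hvw n hn.
have h := inv K HK v w hvw n hn.
have : 1 <= cnt K w n.
  apply: leq_trans (cnt_mono K w _ _ hn).
  rewrite /cnt !big_ord_recr big_ord0 /= (K2 K HK).
  have [_ [-> _]] := HK.
  by case/orP: hvw => /andP[_ /eqP->].
move: h; case: (K n == v); case: (K n.-1 == v) => /=; lia.
Qed.

Local Open Scope ring_scope.
Import Order.TTheory GRing.Theory Num.Theory.

Theorem mainTheorem1 (K : nat -> nat) (HK : is_kolakoski K) (n : nat)
  (hn : (2 <= n)%N) :
  1 / 4 <= ((ones K n)%:Q / (twos K n)%:Q) /\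
  ((ones K n)%:Q / (twos K n)%:Q) <= 4.
Proof.
rewrite /ones /twos !cntE.
have h1 := bound K HK 1 2 (isT : (1 == 1)%N && (2 == 2)%N || (1 == 2)%N && (2 == 1)%N) n hn.
have h2 := bound K HK 2 1 (isT : (2 == 1)%N && (1 == 2)%N || (2 == 2)%N && (1 == 1)%N) n hn.
have tpos : (0 < cnt K 2 n)%N.
  apply: leq_trans (cnt_mono K 2 _ _ hn).
  rewrite /cnt !big_ord_recr big_ord0 /= (K2 K HK).
  by have [_ [-> _]] := HK.
have tq : 0 < (cnt K 2 n)%:Q by rewrite ltr0n.
have H1 : (cnt K 1 n)%:Q <= 4 * (cnt K 2 n)%:Q.
  by rewrite -[4]/(4%:Q) -intrM -PoszM ler_int.
have H2 : (cnt K 2 n)%:Q <= 4 * (cnt K 1 n)%:Q.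
  by rewrite -[4]/(4%:Q) -intrM -PoszM ler_int.
split.
  rewrite ler_pdivlMr //. lra.
rewrite ler_pdivrMr //.
Qed.
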